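(* Let $R$ be a reflexive relation on $U$ such that $\mathrm{DM(RS)}$ is completely distributive. Then: (i) $\mathcal J^{-}=\{(\emptyset,\{x\}^{\blacktriangle})\mid \{x\}^{\blacktriangle}\in\mathcal J(\wp(U)^{\blacktriangle}),\ x\notin\mathcal S\}$; (ii) if $(\emptyset,\{x\}^{\blacktriangle})\in\mathcal J^{-}$, then for any $z\in\mathfrak{core}\breve R(x)$ we have $g(\emptyset,\{x\}^{\blacktriangle})=(\{z\}^{\vartriangle\blacktriangledown},\{z\}^{\vartriangle\blacktriangle})$, $z\notin\mathcal S$, and $\{z\}^{\vartriangle}$ is completely join-irreducible in $\wp(U)^{\vartriangle}$; (iii) $\mathcal J^{+}=\{(\{x\}^{\vartriangle\blacktriangledown},\{x\}^{\vartriangle\blacktriangle})\mid \{x\}^{\vartriangle}\in\mathcal J(\wp(U)^{\vartriangle}),\ x\notin\mathcal S\}$; (iv) $\mathcal J^{\circ}=\{(\{x\},\{x\}^{\blacktriangle})\mid x\in\mathcal S\}$.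
   Context: Let $U$ be a set and $R\subseteq U\times U$ a binary relation. For $x\in U$, $R(x)=\{y\in U\mid (x,y)\in R\}$ and $\breve R(x)=\{y\in U\mid (y,x)\in R\}$; $\mathfrak{core}\breve R(x)=\{w\in \breve R(x)\mid \text{for all }y\in U,\ w\in \breve R(y)\text{ implies }\breve R(x)\subseteq \breve R(y)\}$. For $X\subseteq U$: $X^{\blacktriangledown}=\{x\in U\mid R(x)\subseteq X\}$, $X^{\blacktriangle}=\{x\in U\mid R(x)\cap X\neq\emptyset\}$, $X^{\triangledown}=\{x\in U\mid \breve R(x)\subseteq X\}$, $X^{\vartriangle}=\{x\in U\mid \breve R(x)\cap X\neq\emptyset\}$; composites like $X^{\vartriangle\blacktriangledown}$ mean $(X^{\vartriangle})^{\blacktriangledown}$. $\wp(U)^{\blacktriangledown}=\{X^{\blacktriangledown}\mid X\subseteq U\}$, and similarly $\wp(U)^{\blacktriangle},\wp(U)^{\vartriangle}$, complete lattices under $\subseteq$. $\mathcal S=\{x\in U\mid |R(x)|=1\}$. $\mathrm{RS}=\{(X^{\blacktriangledown},X^{\blacktriangle})\mid X\subseteq U\}$ ordered coordinatewise; $\mathrm{DM(RS)}$ is its Dedekind–MacNeille completion, identified with $\{(A,B)\in\wp(U)^{\blacktriangledown}\times\wp(U)^{\blacktriangle}\mid A^{\vartriangle\blacktriangle}\subseteq B,\ A\cap\mathcal S=B\cap\mathcal S\}$ ordered coordinatewise, with meets $\bigwedge_i(X_i,Y_i)=(\bigcap_iX_i,(\bigcap_iY_i)^{\triangledown\blacktriangle})$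 and joins $\bigvee_i(X_i,Y_i)=((\bigcup_iX_i)^{\vartriangle\blacktriangledown},\bigcup_iY_i)$. For a complete lattice $L$, $\mathcal J(L)$ is its set of completely join-irreducible elements ($j$ with: $j=\bigvee S$ implies $j\in S$). When $\mathrm{DM(RS)}$ is distributive ($R$ reflexive), it is a Kleene algebra with $\sim(A,B)=(B^c,A^c)$. Writing $\mathcal J=\mathcal J(\mathrm{DM(RS)})$, define for $j\in\mathcal J$ the element $g(j)=\bigwedge\{a\in\mathrm{DM(RS)}\mid a\not\le\sim j\}$ (which lies in $\mathcal J$ and is comparable with $j$), and set $\mathcal J^{-}=\{j\in\mathcal J\mid j<g(j)\}$, $\mathcal J^{\circ}=\{j\in\mathcal J\mid j=g(j)\}$, $\mathcal J^{+}=\{j\in\mathcal J\mid j>g(j)\}$. *)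

(* Defs.v *)
From Stdlib Require Import Classical FunctionalExtensionality PropExtensionality.

Set Implicit Arguments.
Definition pset (U : Type) := U -> Prop.
Definition pair_set (U : Type) := (pset U * pset U)%type.

Section RoughSets.
Variable U : Type.
Variable R : U -> U -> Prop.

Definition emptyset : pset U := fun _ => False.
Definition single (x : U) : pset U := fun y => y = x.
Definition compl (X : pset U) : pset U := fun y => ~ X y.
Definition subset (X Y : pset U) : Prop := forall y, X y -> Y y.

Definition Rimg (x : U) : pset U := fun y => R x y.
Definition Rinv (x : U) : pset U := fun y => R y x.

Definition core (x : U) : pset U := fun w =>
  Rinv x w /\ forall y, Rinv y w -> subset (Rinv x) (Rinv y).

(* X^blacktriangledown, X^blacktriangle, X^triangledown, X^vartriangle *)
Definition ubox (X : pset U) : pset U := fun x => subset (Rimg x) X.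
Definition udia (X : pset U) : pset U := fun x => exists y, Rimg x y /\ X y.
Definition lbox (X : pset U) : pset U := fun x => subset (Rinv x) X.
Definition ldia (X : pset U) : pset U := fun x => exists y, Rinv x y /\ X y.

Definition Sset : pset U := fun x => exists y, Rimg x = single y.

Definition image_of (op : pset U -> pset U) : pset U -> Prop :=
  fun A => exists X, A = op X.

Definition is_lub_in (P : pset U -> Prop) (F : pset U -> Prop) (j : pset U) :=
  P j /\ (forall a, F a -> subset a j) /\
  (forall b, P b -> (forall a, F a -> subset a b) -> subset j b).

Definition cji_sets (P : pset U -> Prop) (j : pset U) : Prop :=
  P j /\ forall F : pset U -> Prop, (forall a, F a -> P a) ->
    is_lub_in P F j -> F j.

Definition DM (p : pair_set U) : Prop :=
  image_of ubox (fst p) /\ image_of udia (snd p) /\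
  subset (udia (ldia (fst p))) (snd p) /\
  (forall x, Sset x -> (fst p x <-> snd p x)).

Definition le_pair (p q : pair_set U) : Prop :=
  subset (fst p) (fst q) /\ subset (snd p) (snd q).

Definition lt_pair (p q : pair_set U) : Prop := le_pair p q /\ p <> q.

Definition joinI {K : Type} (a : K -> pair_set U) : pair_set U :=
  (ubox (ldia (fun x => exists k, fst (a k) x)), fun x => exists k, snd (a k) x).

Definition meetI {K : Type} (a : K -> pair_set U) : pair_set U :=
  (fun x => forall k, fst (a k) x, udia (lbox (fun x => forall k, snd (a k) x))).

Definition DM_completely_distributive : Prop :=
  forall (I : Type) (J : I -> Type) (a : forall i, J i -> pair_set U),
    (forall i j, DM (a i j)) ->
    meetI (fun i => joinI (fun j : J i => a i j)) =
    joinI (fun f : (forall i, J i) => meetI (fun i => a i (f i))).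

Definition cjiDM (j : pair_set U) : Prop :=
  DM j /\ forall (K : Type) (a : K -> pair_set U),
    (forall k, DM (a k)) -> j = joinI a -> exists k, j = a k.

Definition neg (p : pair_set U) : pair_set U := (compl (snd p), compl (fst p)).

Definition gmap (j : pair_set U) : pair_set U :=
  meetI (fun a : { a : pair_set U | DM a /\ ~ le_pair a (neg j) } => proj1_sig a).

Definition Jminus (j : pair_set U) : Prop := cjiDM j /\ lt_pair j (gmap j).
Definition Jcirc (j : pair_set U) : Prop := cjiDM j /\ j = gmap j.
Definition Jplus (j : pair_set U) : Prop := cjiDM j /\ lt_pair (gmap j) j.

End RoughSets.

(* Main.v *)
Require Import Defs.
From Stdlib Require Import Classical FunctionalExtensionality PropExtensionality.

Lemma set_ext {U : Type} (X Y : pset U) : (forall y, X y <-> Y y) -> X = Y.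
Proof. intros H. apply functional_extensionality; intro y.
  apply propositional_extensionality; auto. Qed.

Section Main.
Variable U : Type.
Variable R : U -> U -> Prop.
Hypothesis Hrefl : forall x, R x x.

Ltac unf := unfold ubox, udia, lbox, ldia, subset, Rimg, Rinv, single, emptyset, compl in *.

Definition bx (x:U) : pair_set U := (@emptyset U, udia R (single x)).
Definition tx (x:U) : pair_set U := (ubox R (ldia R (single x)), udia R (ldia R (single x))).
Definition cx (x:U) : pair_set U := (single x, udia R (single x)).
Definition dy (y:U) : pair_set U := (fun v => v = y /\ Sset R y, udia R (single y)).

Lemma pair_ext (p q : pair_set U) : (forall y, fst p y <-> fst q y) -> (forall y, snd p y <-> snd q y) -> p = q.
Proof. destruct p, q; simpl; intros; f_equal; apply set_ext; auto. Qed.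

Lemma le_antisym (p q : pair_set U) : le_pair p q -> le_pair q p -> p = q.
Proof. intros [a b] [c d]. apply pair_ext; split; auto. Qed.

Lemma lt_irrefl (p : pair_set U) : lt_pair p p -> False.
Proof. intros [_ h]; apply h; reflexivity. Qed.

Lemma lt_asym (p q : pair_set U) : lt_pair p q -> lt_pair q p -> False.
Proof. intros [l1 n] [l2 _]; apply n; apply le_antisym; auto. Qed.

Lemma S_iff x : Sset R x <-> forall y, R x y -> y = x.
Proof. split.
 - intros [v Hv] y Hy. assert (Hx: Rimg R x x) by apply Hrefl.
   assert (Hy': Rimg R x y) by exact Hy. rewrite Hv in Hx, Hy'. unfold single in *. congruence.
 - intros H. exists x. apply set_ext. intro y. unfold Rimg, single. split; [apply H| intros ->; apply Hrefl].
Qed.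

Lemma ldia_ubox X : subset (ldia R (ubox R X)) X.
Proof. unf. intros y [v [Hv Hu]]. apply Hu; exact Hv. Qed.
Lemma udia_lbox X : subset (udia R (lbox R X)) X.
Proof. unf. intros y [v [Hv Hu]]. apply Hu; exact Hv. Qed.
Lemma sub_ubox_ldia X : subset X (ubox R (ldia R X)).
Proof. unf. intros x Hx y Hy. exists x; auto. Qed.
Lemma sub_lbox_udia X : subset X (lbox R (udia R X)).
Proof. unf. intros x Hx y Hy. exists x; auto. Qed.
Lemma ubox_mono X Y : subset X Y -> subset (ubox R X) (ubox R Y).
Proof. unf. intros H x h y r; auto. Qed.
Lemma lbox_mono X Y : subset X Y -> subset (lbox R X) (lbox R Y).
Proof. unf. intros H x h y r; auto. Qed.
Lemma udia_mono X Y : subset X Y -> subset (udia R X) (udia R Y).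
Proof. unf. intros H x [v [h1 h2]]; exists v; auto. Qed.
Lemma ldia_mono X Y : subset X Y -> subset (ldia R X) (ldia R Y).
Proof. unf. intros H x [v [h1 h2]]; exists v; auto. Qed.
Lemma sub_trans (X Y Z : pset U) : subset X Y -> subset Y Z -> subset X Z.
Proof. unfold subset; auto. Qed.

Lemma img_ubox_closed A : image_of (ubox R) A -> subset (ubox R (ldia R A)) A.
Proof. intros [X ->]. apply ubox_mono, ldia_ubox. Qed.
Lemma img_udia_exp B : image_of (udia R) B -> subset B (udia R (lbox R B)).
Proof. intros [X ->]. apply udia_mono, sub_lbox_udia. Qed.
Lemma img_ldia_exp C : image_of (ldia R) C -> subset C (ldia R (ubox R C)).
Proof. intros [X ->]. apply ldia_mono, sub_ubox_ldia. Qed.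

Lemma udia_union (F : pset U -> Prop) : (forall a, F a -> image_of (udia R) a) ->
  image_of (udia R) (fun y => exists a, F a /\ a y).
Proof. intros HF. exists (fun v => exists a, F a /\ lbox R a v). apply set_ext; intro y; split.
 - intros [a [Fa ay]]. destruct (img_udia_exp _ (HF a Fa) y ay) as [v [h1 h2]].
   exists v; split; [exact h1|]. exists a; auto.
 - intros [v [Ryv [a [Fa Hl]]]]. exists a; split; auto.
Qed.
Lemma ldia_union (F : pset U -> Prop) : (forall a, F a -> image_of (ldia R) a) ->
  image_of (ldia R) (fun y => exists a, F a /\ a y).
Proof. intros HF. exists (fun v => exists a, F a /\ ubox R a v). apply set_ext; intro y; split.
 - intros [a [Fa ay]]. destruct (img_ldia_exp _ (HF a Fa) y ay) as [v [h1 h2]].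
   exists v; split; [exact h1|]. exists a; auto.
 - intros [v [Ryv [a [Fa Hl]]]]. exists a; split; auto.
Qed.

Lemma cji_witness (Pp : pset U -> Prop) j : cji_sets Pp j ->
  exists w, j w /\ forall a, Pp a -> subset a j -> a w -> subset j a.
Proof. intros [Pj H]. apply NNPP; intro Hn.
  specialize (H (fun a => Pp a /\ subset a j /\ ~ subset j a)).
  destruct H as [_ [_ H]].
  - intros a [h _]; exact h.
  - split; [exact Pj|]. split; [intros a [_ [h _]]; exact h|].
    intros b Pb Hb y jy. apply NNPP; intro nby. apply Hn. exists y. split; [exact jy|].
    intros a Pa aj ay. apply NNPP; intro nja. apply nby. apply (Hb a); [repeat split; auto| exact ay].
  - apply H. intros y; auto.
Qed.

Lemma cji_of_witness (Pp : pset U -> Prop)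
  (Hun: forall F, (forall a, F a -> Pp a) -> Pp (fun y => exists a, F a /\ a y)) j :
  Pp j -> (exists w, j w /\ forall a, Pp a -> subset a j -> a w -> subset j a) -> cji_sets Pp j.
Proof. intros Pj [w [jw Hw]]. split; auto. intros F FP [_ [Hup Hle]].
  destruct (Hle _ (Hun F FP) (fun a Fa y ay => ex_intro _ a (conj Fa ay)) w jw) as [a [Fa aw]].
  assert (a = j) as <-; [|exact Fa].
  apply set_ext; split; [apply Hup; auto | apply Hw; auto].
Qed.

Lemma lub_sub_union (Pp : pset U -> Prop)
  (Hun: forall F, (forall a, F a -> Pp a) -> Pp (fun y => exists a, F a /\ a y)) F j :
  (forall a, F a -> Pp a) -> is_lub_in Pp F j -> subset j (fun y => exists a, F a /\ a y).
Proof. intros FP [_ [_ Hle]]. apply Hle; [apply Hun; auto|]. intros a Fa y ay; exists a; auto. Qed.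

Lemma empty_ubox : @emptyset U = ubox R (@emptyset U).
Proof. apply set_ext; intro y; unf; split; [contradiction| intro h; exact (h y (Hrefl y))]. Qed.

Lemma DM_fst_closed p : DM R p -> subset (ubox R (ldia R (fst p))) (fst p).
Proof. intros [h _]; apply img_ubox_closed; auto. Qed.


Lemma DM_bx x : ~ Sset R x -> DM R (bx x).
Proof. intros nS. unfold DM, bx; simpl. split; [exists (@emptyset U); apply empty_ubox|].
  split; [exists (single x); reflexivity|]. split.
  - unf. intros y [v [_ [w [_ []]]]].
  - intros s Ss; split; [unf; contradiction|]. intros [w [Rsw Hw]]. unfold single in Hw; subst w.
    apply nS. rewrite (proj1 (S_iff s) Ss x Rsw). exact Ss.
Qed.

Lemma DM_bx_notS x : DM R (bx x) -> ~ Sset R x.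
Proof. intros [_ [_ [_ H]]] Sx. apply (H x Sx). exists x; split; [apply Hrefl| reflexivity]. Qed.

Lemma DM_tx x : DM R (tx x).
Proof. unfold DM, tx; simpl. split; [eexists; reflexivity|]. split; [eexists; reflexivity|]. split.
  - apply udia_mono, ldia_ubox.
  - intros s Ss. pose proof (proj1 (S_iff s) Ss) as HS. split.
    + intros h. exists s; split; [apply Hrefl| apply h, Hrefl].
    + intros [v [Rsv Hv]] w Rsw. rewrite (HS w Rsw). rewrite (HS v Rsv) in Hv. exact Hv.
Qed.

Lemma DM_dy y : DM R (dy y).
Proof. unfold DM, dy; simpl. split.
  - exists (fun v => v = y /\ Sset R y). apply set_ext; intro v; split.
    + intros [-> Sy] w Ryw. split; [|exact Sy]. exact (proj1 (S_iff y) Sy w Ryw).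
    + intros h. exact (h v (Hrefl v)).
  - split; [eexists; reflexivity|]. split.
    + intros w [v [Rwv [u [Ruv [-> Sy]]]]]. rewrite (proj1 (S_iff y) Sy v Ruv) in Rwv.
      exists y; split; [exact Rwv| reflexivity].
    + intros s Ss; split.
      * intros [-> _]. exists y; split; [apply Hrefl| reflexivity].
      * intros [w [Rsw ->]]. rewrite (proj1 (S_iff s) Ss y Rsw). auto.
Qed.

Lemma tx_cx x : Sset R x -> tx x = cx x.
Proof. intros Sx. pose proof (proj1 (S_iff x) Sx) as HS. apply pair_ext; simpl; intro y; unf.
 - split.
   + intros h. destruct (h y (Hrefl y)) as [v [Rvy ->]]. exact (HS y Rvy).
   + intros -> w Rxw. exists x; auto.
 - split.
   + intros [v [Ryv [u [Ruv ->]]]]. rewrite (HS v Ruv) in Ryv. exists x; auto.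
   + intros [v [Ryv ->]]. exists x; split; auto. exists x; split; auto.
Qed.

Lemma joinI_upper {K : Type} (a : K -> pair_set U) k : le_pair (a k) (joinI R a).
Proof. unfold joinI, le_pair; simpl; split.
 - intros x ax y Rxy. exists x; split; [exact Rxy| exists k; exact ax].
 - intros y h; exists k; exact h.
Qed.

Lemma meetI_lower {K : Type} (a : K -> pair_set U) k : le_pair (meetI R a) (a k).
Proof. unfold meetI, le_pair; simpl; split.
 - intros x h; apply h.
 - intros y h. apply udia_lbox in h. apply h.
Qed.

Lemma gmap_lower (j a : pair_set U) : DM R a -> ~ le_pair a (neg j) -> le_pair (gmap R j) a.
Proof. intros D N. unfold gmap.
  exact (meetI_lower (fun a0 : {a0 : pair_set U | DM R a0 /\ ~ le_pair a0 (neg j)} => proj1_sig a0)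
          (exist _ a (conj D N))). Qed.

Lemma gmap_upper (j q : pair_set U) : image_of (udia R) (snd q) ->
  (forall a, DM R a -> ~ le_pair a (neg j) -> le_pair q a) -> le_pair q (gmap R j).
Proof. intros Hq H. unfold gmap, meetI, le_pair; simpl. split.
 - intros y qy [a [Da Na]]. simpl. apply (H a Da Na); exact qy.
 - intros y qy. refine (udia_mono _ _ (lbox_mono _ _ _) y (img_udia_exp _ Hq y qy)).
   intros v qv [a [Da Na]]. simpl. apply (H a Da Na); exact qv.
Qed.

Lemma classify j : cjiDM R j -> (exists x, ~ Sset R x /\ j = bx x) \/ (exists x, j = tx x).
Proof. intros [Dj Hj]. destruct j as [A B].
  destruct Dj as [[X HX] [[Y HY] [Hsub HS]]]. simpl in *.
  set (K := ({x | A x} + {y | Y y /\ ~ Sset R y})%type).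
  set (a := fun k : K => match k with inl x => tx (proj1_sig x) | inr y => bx (proj1_sig y) end).
  assert (Ha: forall k, DM R (a k)).
  { intros [[x xA]|[y [yY ny]]]; simpl; [apply DM_tx| apply DM_bx; exact ny]. }
  assert (Hu: subset (fun v => exists k, fst (a k) v) A).
  { intros v [[[x Ax]|[y yH]] h]; simpl in h; [|destruct h].
    subst A. intros w Rvw. apply (Ax w). destruct (h w Rvw) as [u [Ruw ->]]. exact Ruw. }
  assert (E: (A,B) = joinI R a).
  { apply pair_ext; simpl; intro y; split.
    - intros Ay w Ryw. exists y. split; [exact Ryw|]. exists (inl (exist _ y Ay)). simpl.
      apply sub_ubox_ldia. reflexivity.
    - intros H. apply (img_ubox_closed A); [exists X; exact HX|].
      exact (ubox_mono _ _ (ldia_mono _ _ Hu) y H).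
    - intros By. pose proof By as By'. rewrite HY in By'. destruct By' as [v [Ryv Yv]].
      destruct (classic (Sset R v)) as [Sv|nSv].
      + assert (Av : A v).
        { apply (proj2 (HS v Sv)). rewrite HY. exists v; split; [apply Hrefl| exact Yv]. }
        exists (inl (exist _ v Av)). simpl. exists v; split; [exact Ryv|]. exists v; split; [apply Hrefl|reflexivity].
      + exists (inr (exist _ v (conj Yv nSv))). simpl. exists v; split; [exact Ryv| reflexivity].
    - intros [[[x Ax]|[y0 [Yy0 ny0]]] h]; simpl in h.
      + apply Hsub. revert h. apply udia_mono, ldia_mono. intros w ->. exact Ax.
      + rewrite HY. destruct h as [w [Ryw ->]]. exists y0; split; auto. }
  destruct (Hj K a Ha E) as [[[x Ax]|[y [yY ny]]] Hk]; simpl in Hk.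
  - right; exists x; exact Hk.
  - left; exists y; split; auto.
Qed.

Lemma cji_bx_to x : cjiDM R (bx x) -> cji_sets (image_of (udia R)) (udia R (single x)).
Proof. intros [Db Hb]. pose proof (DM_bx_notS x Db) as nS. split; [exists (single x); reflexivity|].
  intros F FP Hlub.
  set (K := {B : pset U | F B}).
  set (a := fun k : K => (@emptyset U, proj1_sig k)).
  assert (Ha : forall k, DM R (a k)).
  { intros [B FB]. unfold DM, a; simpl. split; [exists (@emptyset U); apply empty_ubox|].
    split; [exact (FP B FB)|]. split; [unf; intros y [v [_ [w [_ []]]]]|].
    intros s Ss; split; [unf; contradiction|]. intros Bs.
    destruct Hlub as [_ [Hup _]]. destruct (Hup B FB s Bs) as [w [Rsw Hw]]. unfold single in Hw; subst w.
    apply nS. rewrite (proj1 (S_iff s) Ss x Rsw). exact Ss. }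
  assert (E : bx x = joinI R a).
  { apply pair_ext; simpl; intro y; split.
    - unf; contradiction.
    - intros h. destruct (h y (Hrefl y)) as [v [_ [k []]]].
    - intros h. destruct (lub_sub_union _ udia_union F _ FP Hlub y h) as [B [FB By]].
      exists (exist _ B FB); exact By.
    - intros [[B FB] By]. destruct Hlub as [_ [Hup _]]. exact (Hup B FB y By). }
  destruct (Hb K a Ha E) as [[B FB] Hk]. unfold bx, a in Hk; simpl in Hk.
  injection Hk as Hk. rewrite Hk; exact FB.
Qed.

Lemma cji_bx_from x : ~ Sset R x -> cji_sets (image_of (udia R)) (udia R (single x)) -> cjiDM R (bx x).
Proof. intros nS [_ Hc]. split; [apply DM_bx; exact nS|]. intros K a Ha E.
  destruct (Hc (fun B => exists k, snd (a k) = B)) as [k Hk].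
  - intros B [k <-]. destruct (Ha k) as [_ [h _]]; exact h.
  - split; [exists (single x); reflexivity|]. split.
    + intros B [k <-] y hy. pose proof (joinI_upper a k) as [_ h]. rewrite <- E in h. exact (h y hy).
    + intros b Pb Hup y hy. assert (h : snd (joinI R a) y) by (rewrite <- E; exact hy).
      destruct h as [k hk]. apply (Hup (snd (a k))); [exists k; reflexivity| exact hk].
  - exists k. apply pair_ext; intro y.
    + simpl. split; [unf; contradiction|]. intros h. pose proof (joinI_upper a k) as [h1 _].
      rewrite <- E in h1. exact (h1 y h).
    + rewrite Hk. reflexivity.
Qed.

Lemma cji_tx_to x : cjiDM R (tx x) -> cji_sets (image_of (ldia R)) (ldia R (single x)).
Proof. intros [_ Hb]. split; [exists (single x); reflexivity|]. intros F FP Hlub.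
  set (K := {C : pset U | F C}).
  set (a := fun k : K => (ubox R (proj1_sig k), udia R (proj1_sig k))).
  assert (Ha : forall k, DM R (a k)).
  { intros [C FC]. unfold DM, a; simpl. split; [eexists; reflexivity|].
    split; [eexists; reflexivity|]. split; [apply udia_mono, ldia_ubox|].
    intros s Ss. pose proof (proj1 (S_iff s) Ss) as HS. split.
    - intros h. exists s; split; [apply Hrefl| apply h, Hrefl].
    - intros [v [Rsv Hv]] w Rsw. rewrite (HS w Rsw). rewrite (HS v Rsv) in Hv. exact Hv. }
  destruct Hlub as [Pj [Hup Hle]] eqn:Hl.
  assert (L : forall w, ldia R (single x) w <-> ldia R (fun v => exists k, fst (a k) v) w).
  { intros w; split.
    - intros hw. destruct (lub_sub_union _ ldia_union F _ FP Hlub w hw) as [C [FC Cw]].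
      destruct (img_ldia_exp _ (FP C FC) w Cw) as [v [Rvw Hv]].
      exists v; split; [exact Rvw|]. exists (exist _ C FC); exact Hv.
    - intros [v [Rvw [[C FC] Hv]]]. simpl in Hv. apply (Hup C FC). exact (Hv w Rvw). }
  assert (E : tx x = joinI R a).
  { apply pair_ext; simpl; intro y; split.
    - intros h w Ryw. apply L, h, Ryw.
    - intros h w Ryw. apply L, h, Ryw.
    - intros [v [Ryv hv]]. destruct (lub_sub_union _ ldia_union F _ FP Hlub v hv) as [C [FC Cv]].
      exists (exist _ C FC). simpl. exists v; auto.
    - intros [[C FC] h]. simpl in h. revert h. apply udia_mono. exact (Hup C FC). }
  destruct (Hb K a Ha E) as [[C FC] Hk]. unfold tx, a in Hk; simpl in Hk.
  injection Hk as Hf _.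
  assert (C = ldia R (single x)) as <-; [|exact FC].
  apply set_ext; intro w; split.
  - intros Cw. pose proof (img_ldia_exp _ (FP C FC) w Cw) as h. rewrite <- Hf in h. exact (ldia_ubox _ w h).
  - intros h. apply (img_ldia_exp _ Pj) in h. rewrite Hf in h. exact (ldia_ubox _ w h).
Qed.

Lemma cji_tx_from x : cji_sets (image_of (ldia R)) (ldia R (single x)) -> cjiDM R (tx x).
Proof. intros [_ Hc]. split; [apply DM_tx|]. intros K a Ha E.
  destruct (Hc (fun C => exists k, ldia R (fst (a k)) = C)) as [k Hk].
  - intros C [k <-]. eexists; reflexivity.
  - split; [exists (single x); reflexivity|]. split.
    + intros C [k <-] w [v [Rvw av]]. pose proof (joinI_upper a k) as [h1 _]. rewrite <- E in h1.
      exact (h1 v av w Rvw).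
    + intros b Pb Hup w hw.
      assert (hx : fst (joinI R a) x) by (rewrite <- E; apply sub_ubox_ldia; reflexivity).
      destruct hw as [u [Ruw Hu]]. unfold single in Hu; subst u.
      destruct (hx w Ruw) as [v [Rvw [k av]]].
      apply (Hup (ldia R (fst (a k)))); [exists k; reflexivity| exists v; auto].
  - exists k. apply le_antisym.
    + split; simpl.
      * rewrite <- Hk. apply DM_fst_closed, Ha.
      * rewrite <- Hk. destruct (Ha k) as [_ [_ [h _]]]. exact h.
    + rewrite E. apply joinI_upper.
Qed.


Lemma F2 x z : core R x z -> gmap R (bx x) = tx z.
Proof. intros [Hzx Hcz]. unfold Rinv in Hzx.
  assert (Hcz' : forall y, R z y -> forall u, R u x -> R u y) by (intros y h u; apply (Hcz y h u)).
  apply le_antisym.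
  - apply gmap_lower; [apply DM_tx|]. intros [h1 _]. simpl in h1.
    apply (h1 z (sub_ubox_ldia _ z eq_refl)). exists x; split; [exact Hzx| reflexivity].
  - apply gmap_upper; [eexists; reflexivity|]. intros a Da Na.
    assert (Hy : exists y, fst a y /\ R y x).
    { apply NNPP; intro H. apply Na. split; simpl.
      - intros y ay [w [Ryw Hw]]. unfold single in Hw; subst w. apply H; exists y; auto.
      - intros y _ []. }
    destruct Hy as [y [ay Ryx]].
    assert (K : subset (ldia R (single z)) (ldia R (fst a))).
    { intros w [v [Rvw Hv]]. unfold single in Hv; subst v. exists y; split; [exact (Hcz' w Rvw y Ryx)| exact ay]. }
    split; simpl.
    + apply (sub_trans _ _ _ (ubox_mono _ _ K)). apply DM_fst_closed, Da.
    + apply (sub_trans _ _ _ (udia_mono _ _ K)). destruct Da as [_ [_ [h _]]]. exact h.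
Qed.

Lemma F3 x z : core R x z -> lt_pair (bx x) (tx z).
Proof. intros [Hzx _]. unfold Rinv in Hzx. split.
  - split; simpl.
    + unf; contradiction.
    + intros y [w [Ryw Hw]]. unfold single in Hw; subst w. exists x; split; [exact Ryw|].
      exists z; split; [exact Hzx| reflexivity].
  - intros E. assert (h : fst (tx z) z) by (apply sub_ubox_ldia; reflexivity).
    rewrite <- E in h. exact h.
Qed.

Lemma F4 x : cjiDM R (tx x) -> ~ Sset R x -> lt_pair (gmap R (tx x)) (tx x).
Proof. intros Hc nS. destruct (cji_witness _ _ (cji_tx_to x Hc)) as [w [Hxw Hw]].
  destruct Hxw as [u [Rxw Hu]]. unfold single in Hu; subst u.
  assert (nSw : ~ Sset R w).
  { intros Sw. pose proof (proj1 (S_iff w) Sw) as HS. apply nS. apply S_iff. intros y Rxy.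
    assert (Hs : subset (ldia R (single x)) (ldia R (single w))).
    { apply Hw; [eexists; reflexivity| |exists w; split; [apply Hrefl| reflexivity]].
      intros v [u [Ruv Hu]]. unfold single in Hu; subst u. rewrite (HS v Ruv).
      exists x; split; [exact Rxw| reflexivity]. }
    destruct (Hs y (ex_intro _ x (conj Rxy eq_refl))) as [u [Ruy Hu]]. unfold single in Hu; subst u.
    destruct (Hs x (ex_intro _ x (conj (Hrefl x) eq_refl))) as [u [Rux Hu]]. unfold single in Hu; subst u.
    rewrite (HS y Ruy). symmetry. exact (HS x Rux). }
  assert (hx : fst (tx x) x) by (apply sub_ubox_ldia; reflexivity).
  assert (G1 : le_pair (gmap R (tx x)) (bx w)).
  { apply gmap_lower; [apply DM_bx; exact nSw|]. intros [_ h2]. simpl in h2.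
    apply (h2 x (ex_intro _ w (conj Rxw eq_refl))). exact hx. }
  assert (G2 : le_pair (gmap R (tx x)) (tx x)).
  { apply gmap_lower; [apply DM_tx|]. intros [h1 _]. simpl in h1.
    apply (h1 x hx). exists x; split; [apply Hrefl|]. exists x; split; [apply Hrefl| reflexivity]. }
  split; [exact G2|]. intros E. rewrite <- E in hx. exact (proj1 G1 x hx).
Qed.

Lemma F5 x : Sset R x -> gmap R (cx x) = cx x.
Proof. intros Sx. pose proof (proj1 (S_iff x) Sx) as HS. apply le_antisym.
  - apply gmap_lower; [rewrite <- tx_cx; [apply DM_tx| exact Sx]|]. intros [h1 _]. simpl in h1.
    apply (h1 x eq_refl). exists x; split; [apply Hrefl| reflexivity].
  - apply gmap_upper; [eexists; reflexivity|]. intros a Da Na.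
    assert (ax : fst a x).
    { apply NNPP; intro nx. apply Na. split; simpl.
      - intros y ay [w [Ryw Hw]]. unfold single in Hw; subst w. apply nx.
        apply DM_fst_closed; [exact Da|]. intros w Rxw. rewrite (HS w Rxw). exists y; auto.
      - intros y ay ey. unfold single in ey; subst y. apply nx.
        destruct Da as [_ [_ [_ HSa]]]. apply (HSa x Sx); exact ay. }
    split; simpl.
    + intros y ey. unfold single in ey; subst y. exact ax.
    + intros y [w [Ryw Hw]]. unfold single in Hw; subst w. destruct Da as [_ [_ [h _]]]. apply h.
      exists x; split; [exact Ryw|]. exists x; split; [apply Hrefl| exact ax].
Qed.

Lemma F6 x : Sset R x -> cjiDM R (cx x).
Proof. intros Sx. pose proof (proj1 (S_iff x) Sx) as HS. rewrite <- tx_cx; [|exact Sx].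
  apply cji_tx_from. apply cji_of_witness; [apply ldia_union| eexists; reflexivity|].
  exists x. split; [exists x; split; [apply Hrefl| reflexivity]|].
  intros a _ _ ax y [u [Ruy Hu]]. unfold single in Hu; subst u. rewrite (HS y Ruy). exact ax.
Qed.

Lemma F7 x z : core R x z -> cji_sets (image_of (ldia R)) (ldia R (single z)).
Proof. intros [Hzx Hcz]. unfold Rinv in Hzx.
  apply cji_of_witness; [apply ldia_union| eexists; reflexivity|].
  exists x. split; [exists z; split; [exact Hzx| reflexivity]|].
  intros a [X HX] _ ax. subst a. destruct ax as [y [Ryx Xy]].
  intros v [u [Ruv Hu]]. unfold single in Hu; subst u. exists y; split; [|exact Xy].
  exact (Hcz v Ruv y Ryx).
Qed.


Variable Hcd : DM_completely_distributive R.

Lemma core_exists x : cjiDM R (bx x) -> exists z, core R x z.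
Proof. intros Hc. pose proof (DM_bx_notS x (proj1 Hc)) as nS.
  apply NNPP; intro Hn.
  assert (Hn' : forall z, R z x -> exists y, R z y /\ exists u, R u x /\ ~ R u y).
  { intros z Rz. apply NNPP; intro H. apply Hn. exists z. split; [exact Rz|].
    intros y Hzy u Hu. apply NNPP; intro nu. apply H. exists y; split; [exact Hzy|]. exists u; auto. }
  set (K := {p : U * U | R (fst p) (snd p) /\ exists u, R u x /\ ~ R u (snd p)}).
  set (J := fun b : bool => if b return Type then (unit : Type) else K).
  set (a := fun i : bool => match i as b return J b -> pair_set U with
                           | true => fun _ => bx x
                           | false => fun k => dy (snd (proj1_sig (k : K))) end).
  assert (Ha : forall i j, DM R (a i j)).
  { intros [|] j; simpl; [apply DM_bx; exact nS| apply DM_dy]. }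
  pose proof (Hcd bool J a Ha) as E.
  assert (L : meetI R (fun i => joinI R (a i)) = bx x).
  { assert (I : forall v, (forall i, snd (joinI R (a i)) v) <-> udia R (single x) v).
    { intros v; split.
      - intros h. destruct (h true) as [t hv]. exact hv.
      - intros hv [|]; simpl; [exists tt; exact hv|].
        destruct hv as [w [Rvw Hw]]. unfold single in Hw; subst w.
        destruct (Hn' v Rvw) as [y [Rvy Hy]].
        exists (exist _ (v, y) (conj Rvy Hy)). simpl. exists y; split; [exact Rvy| reflexivity]. }
    apply pair_ext; simpl; intro y; split.
    - intros h. specialize (h true). simpl in h. destruct (h y (Hrefl y)) as [v [_ [_ []]]].
    - unf; contradiction.
    - intros h. apply udia_lbox. revert h. apply udia_mono, lbox_mono. intros v hv. apply I, hv.
    - intros h. apply img_udia_exp in h; [|eexists; reflexivity]. revert h. apply udia_mono, lbox_mono.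
      intros v hv. apply I, hv. }
  assert (E2 : bx x = joinI R (fun f : (forall i, J i) => meetI R (fun i => a i (f i)))) by (rewrite <- L; exact E).
  destruct Hc as [_ Hb].
  destruct (Hb _ (fun f => meetI R (fun i => a i (f i)))) as [f Hf].
  - intros f. unfold DM, meetI; simpl. split.
    { exists (@emptyset U). rewrite <- empty_ubox. apply set_ext; intro y; split.
      - intros h. specialize (h true). exact h.
      - unf; contradiction. }
    split; [eexists; reflexivity|]. split.
    { intros y [v [_ [w [_ hw]]]]. specialize (hw true). destruct hw. }
    intros s Ss. split; [intros h; specialize (h true); destruct h|].
    intros [w [Rsw Hl]]. exfalso. rewrite (proj1 (S_iff s) Ss w Rsw) in Hl.
    specialize (Hl s (Hrefl s) true). simpl in Hl. destruct Hl as [w' [Rsw' Hw']].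
    unfold single in Hw'; subst w'. apply nS. rewrite (proj1 (S_iff s) Ss x Rsw'). exact Ss.
  - exact E2.
  - assert (H2 := f_equal snd Hf). simpl in H2.
    set (k := f false). 
    assert (Hk : forall u, udia R (single x) u -> snd (a false k) u).
    { intros u hu. rewrite H2 in hu. destruct hu as [w [Ruw Hl]]. exact (Hl u Ruw false). }
    clearbody k. simpl in k.
    destruct k as [[p1 p2] [Hp [u [Hu Hnu]]]].
    assert (hu : udia R (single x) u) by (exists x; split; [exact Hu| reflexivity]).
    destruct (Hk u hu) as [w [Ruw Hw]]. simpl in Hw. unfold single in Hw; subst w. exact (Hnu Ruw).
Qed.

Lemma main_sec :
  (forall j, Jminus R j <->
     exists x, j = (@emptyset U, udia R (single x)) /\
               cji_sets (image_of (udia R)) (udia R (single x)) /\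
               ~ Sset R x) /\
  (forall x, Jminus R (@emptyset U, udia R (single x)) ->
     forall z, core R x z ->
       gmap R (@emptyset U, udia R (single x)) =
         (ubox R (ldia R (single z)), udia R (ldia R (single z))) /\
       ~ Sset R z /\
       cji_sets (image_of (ldia R)) (ldia R (single z))) /\
  (forall j, Jplus R j <->
     exists x, j = (ubox R (ldia R (single x)), udia R (ldia R (single x))) /\
               cji_sets (image_of (ldia R)) (ldia R (single x)) /\
               ~ Sset R x) /\
  (forall j, Jcirc R j <->
     exists x, Sset R x /\ j = (single x, udia R (single x))).
Proof. split; [|split; [|split]].
  - intro j; split.
    + intros [Hc Hlt]. destruct (classify j Hc) as [[x [nS ->]] | [x ->]].
      * exists x. split; [reflexivity|]. split; [apply cji_bx_to; exact Hc| exact nS].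
      * exfalso. destruct (classic (Sset R x)) as [Sx|nS].
        -- rewrite (tx_cx x Sx), (F5 x Sx) in Hlt. exact (lt_irrefl _ Hlt).
        -- exact (lt_asym _ _ Hlt (F4 x Hc nS)).
    + intros [x [-> [Hcji nS]]]. pose proof (cji_bx_from x nS Hcji) as Hc.
      destruct (core_exists x Hc) as [z Hz]. split; [exact Hc|].
      change (lt_pair (bx x) (gmap R (bx x))). rewrite (F2 x z Hz). exact (F3 x z Hz).
  - intros x [Hc _] z Hz. change (cjiDM R (bx x)) in Hc.
    pose proof (DM_bx_notS x (proj1 Hc)) as nS. split; [exact (F2 x z Hz)|]. split.
    + intro Sz. apply nS. destruct Hz as [Hzx _]. unfold Rinv in Hzx.
      rewrite (proj1 (S_iff z) Sz x Hzx). exact Sz.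
    + exact (F7 x z Hz).
  - intro j; split.
    + intros [Hc Hlt]. destruct (classify j Hc) as [[x [nS ->]] | [x ->]].
      * exfalso. destruct (core_exists x Hc) as [z Hz]. rewrite (F2 x z Hz) in Hlt.
        exact (lt_asym _ _ Hlt (F3 x z Hz)).
      * exists x. split; [reflexivity|]. split; [apply cji_tx_to; exact Hc|]. intro Sx.
        rewrite (tx_cx x Sx), (F5 x Sx) in Hlt. exact (lt_irrefl _ Hlt).
    + intros [x [-> [Hcji nS]]]. pose proof (cji_tx_from x Hcji) as Hc.
      split; [exact Hc| exact (F4 x Hc nS)].
  - intro j; split.
    + intros [Hc He]. destruct (classify j Hc) as [[x [nS ->]] | [x ->]].
      * exfalso. destruct (core_exists x Hc) as [z Hz]. rewrite (F2 x z Hz) in He.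
        destruct (F3 x z Hz) as [_ n]. exact (n He).
      * destruct (classic (Sset R x)) as [Sx|nS].
        -- exists x; split; [exact Sx| exact (tx_cx x Sx)].
        -- exfalso. destruct (F4 x Hc nS) as [_ n]. apply n. symmetry; exact He.
    + intros [x [Sx ->]]. split; [exact (F6 x Sx)|]. symmetry. exact (F5 x Sx).
Qed.

End Main.

Theorem mainTheorem7 (U : Type) (R : U -> U -> Prop)
  (Hrefl : forall x, R x x)
  (Hcd : DM_completely_distributive R) :
  (* (i) *)
  (forall j, Jminus R j <->
     exists x, j = (@emptyset U, udia R (single x)) /\
               cji_sets (image_of (udia R)) (udia R (single x)) /\
               ~ Sset R x) /\
  (* (ii) *)
  (forall x, Jminus R (@emptyset U, udia R (single x)) ->
     forall z, core R x z ->
       gmap R (@emptyset U, udia R (single x)) =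
         (ubox R (ldia R (single z)), udia R (ldia R (single z))) /\
       ~ Sset R z /\
       cji_sets (image_of (ldia R)) (ldia R (single z))) /\
  (* (iii) *)
  (forall j, Jplus R j <->
     exists x, j = (ubox R (ldia R (single x)), udia R (ldia R (single x))) /\
               cji_sets (image_of (ldia R)) (ldia R (single x)) /\
               ~ Sset R x) /\
  (* (iv) *)
  (forall j, Jcirc R j <->
     exists x, Sset R x /\ j = (single x, udia R (single x))).
Proof. exact (main_sec U R Hrefl Hcd). Qed.
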